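(* For all matches $(p,\sigma)$, $(q,\rho)$ with $p,\sigma\sqsubseteq q,\rho$: for every pattern $r$ and substitution $\theta$ such that $\{r\,\|\,p\}=(\theta,\sigma)$, it holds that $\{r\,\|\,q\}=(\theta,\rho)$.
   Context: CPC patterns over a countable set of names: $p ::= \lambda x \mid x \mid \ulcorner x\urcorner \mid p\bullet p$ (binding name, variable name, protected name, compound). ${\sf bn}(p)$, ${\sf vn}(p)$, ${\sf pn}(p)$ are the sets of binding, variable and protected names of $p$; ${\sf fn}(p)={\sf vn}(p)\cup{\sf pn}(p)$. Patterns are well formed (binding names pairwise distinct and distinct from free names). Communicable patterns contain no protected or binding names. A substitution is a finite partial function from names to communicable patterns; $\hat\sigma$ acts on patterns by $\hat\sigma x=x$, $\hat\sigma\ulcorner x\urcorner=\ulcorner x\urcorner$, $\hat\sigma(\lambda x)=\sigma(x)$ if $x\in{\sf dom}(\sigma)$ else $\lambda x$, $\hat\sigma(p\bullet q)=\hat\sigma p\bullet\hat\sigma q$. Unification $\{p\,\|\,q\}$ is a pair of substitutions or undefined: $\{x\|x\}=\{x\|\ulcorner x\urcorner\}=\{\ulcorner x\urcorner\|x\}=\{\ulcorner x\urcorner\|\ulcorner x\urcorner\}=(\{\},\{\})$; $\{\lambda x\|q\}=(\{q/x\},\{\})$ if $q$ is communicable; $\{p\|\lambda x\}=(\{\},\{p/x\})$ if $p$ is communicable; $\{p_1\bullet p_2\|q_1\bullet q_2\}=(\sigma_1\cup\sigma_2,\rho_1\cup\rho_2)$ if $\{p_i\|q_i\}=(\sigma_i,\rho_i)$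 for $i=1,2$; undefined otherwise. A match $(p,\sigma)$ is a pattern $p$ and substitution $\sigma$ with ${\sf dom}(\sigma)={\sf bn}(p)$. Compatibility $p,\sigma\sqsubseteq q,\rho$ is the least relation between matches with: $p,\sigma\sqsubseteq\lambda y,\{\hat\sigma p/y\}$ if ${\sf fn}(p)=\emptyset$; $n,\{\}\sqsubseteq n,\{\}$; $\ulcorner n\urcorner,\{\}\sqsubseteq\ulcorner n\urcorner,\{\}$; $\ulcorner n\urcorner,\{\}\sqsubseteq n,\{\}$; $p_1\bullet p_2,\sigma_1\cup\sigma_2\sqsubseteq q_1\bullet q_2,\rho_1\cup\rho_2$ if $p_i,\sigma_i\sqsubseteq q_i,\rho_i$ for $i=1,2$. *)

(* Defs.v *)
From HB Require Import structures.
From mathcomp Require Import all_boot.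
From mathcomp Require Import finmap.
Set Implicit Arguments. Unset Strict Implicit. Unset Printing Implicit Defensive.
Local Open Scope fmap_scope.

Definition name := nat.

(* CPC patterns: p ::= \lambda x | x | <x> | p . p *)
Inductive pattern : Type :=
| PBind of name
| PVar of name
| PProt of name
| PComp of pattern & pattern.

Definition pattern_eq_dec (p q : pattern) : {p = q} + {p <> q}.
Proof. decide equality; match goal with |- sumbool (?a = ?b) _ => exact: (decP (a =P b)) end.
Defined.

Definition pattern_eqb (p q : pattern) : bool := if pattern_eq_dec p q then true else false.
Lemma pattern_eqP : Equality.axiom pattern_eqb.
Proof. by move=> p q; rewrite /pattern_eqb; case: pattern_eq_dec => h; constructor. Qed.
HB.instance Definition _ := hasDecEq.Build pattern pattern_eqP.

(* Binding / variable / protected names, as lists (bn keeps multiplicities so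
   that pairwise distinctness can be expressed). *)
Fixpoint bn (p : pattern) : seq name :=
  match p with PBind x => [:: x] | PVar _ | PProt _ => [::] | PComp p1 p2 => bn p1 ++ bn p2 end.
Fixpoint vn (p : pattern) : seq name :=
  match p with PVar x => [:: x] | PBind _ | PProt _ => [::] | PComp p1 p2 => vn p1 ++ vn p2 end.
Fixpoint pn (p : pattern) : seq name :=
  match p with PProt x => [:: x] | PBind _ | PVar _ => [::] | PComp p1 p2 => pn p1 ++ pn p2 end.
Definition fn (p : pattern) : seq name := vn p ++ pn p.

Definition well_formed (p : pattern) : bool :=
  uniq (bn p) && all (fun x => x \notin fn p) (bn p).

Fixpoint communicable (p : pattern) : bool :=
  match p with PVar _ => true | PBind _ | PProt _ => false
  | PComp p1 p2 => communicable p1 && communicable p2 end.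

Definition subst := {fmap name -> pattern}.
Definition is_subst (s : subst) : Prop :=
  forall x v, s.[? x] = Some v -> communicable v.

Definition empty_subst : subst := [fmap].
Definition single_subst (x : name) (v : pattern) : subst := [fmap].[x <- v].

(* Union of partial functions: defined iff they agree on common names. *)
Definition union (s1 s2 : subst) : option subst :=
  if all (fun k => if s2.[? k] is Some v then s1.[? k] == Some v else true)
         (enum_fset (domf s1))
  then Some (catf s1 s2) else None.

Fixpoint apply_subst (s : subst) (p : pattern) : pattern :=
  match p with
  | PBind x => if s.[? x] is Some v then v else PBind x
  | PVar x => PVar x
  | PProt x => PProt x
  | PComp p1 p2 => PComp (apply_subst s p1) (apply_subst s p2)
  end.

Fixpoint unify (p q : pattern) : option (subst * subst) :=
  match p, q with
  | PVar x, PVar y | PVar x, PProt y | PProt x, PVar y | PProt x, PProt y =>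
      if x == y then Some (empty_subst, empty_subst) else None
  | PBind x, _ => if communicable q then Some (single_subst x q, empty_subst) else None
  | _, PBind y => if communicable p then Some (empty_subst, single_subst y p) else None
  | PComp p1 p2, PComp q1 q2 =>
      match unify p1 q1, unify p2 q2 with
      | Some (s1, r1), Some (s2, r2) =>
          match union s1 s2, union r1 r2 with
          | Some s, Some r => Some (s, r)
          | _, _ => None
          end
      | _, _ => None
      end
  | _, _ => None
  end.

Definition is_match (p : pattern) (s : subst) : Prop :=
  well_formed p /\ is_subst s /\ (forall x, (x \in domf s) = (x \in bn p)).

Inductive compat : pattern -> subst -> pattern -> subst -> Prop :=
| compat_bind p s y :
    is_match p s -> fn p = [::] ->
    compat p s (PBind y) (single_subst y (apply_subst s p))
| compat_var n : compat (PVar n) empty_subst (PVar n) empty_subst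
| compat_prot n : compat (PProt n) empty_subst (PProt n) empty_subst
| compat_prot_var n : compat (PProt n) empty_subst (PVar n) empty_subst
| compat_comp p1 p2 q1 q2 s1 s2 r1 r2 s r :
    compat p1 s1 q1 r1 -> compat p2 s2 q2 r2 ->
    union s1 s2 = Some s -> union r1 r2 = Some r ->
    compat (PComp p1 p2) s (PComp q1 q2) r.

(* Main.v *)
Require Import Defs.
From mathcomp Require Import all_boot.
From mathcomp Require Import finmap.
Local Open Scope fmap_scope.
Set Implicit Arguments. Unset Strict Implicit.

Lemma union_cat s1 s2 s : union s1 s2 = Some s -> s = catf s1 s2.
Proof. by rewrite /union; case: ifP => // _ [<-]. Qed.

Lemma union_l s1 s2 s k : union s1 s2 = Some s -> k \in domf s1 -> s.[? k] = s1.[? k].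
Proof.
rewrite /union; case: ifP => // /allP H [<-] ks1.
rewrite fnd_cat; case: ifP => // ks2.
have := H k ks1; rewrite in_fnd => /eqP ->; by rewrite -in_fnd.
Qed.

Lemma union_r s1 s2 s k : union s1 s2 = Some s -> k \in domf s2 -> s.[? k] = s2.[? k].
Proof. by move=> /union_cat -> ks2; rewrite fnd_cat ks2. Qed.

Lemma union_dom s1 s2 s k : union s1 s2 = Some s -> (k \in domf s) = (k \in domf s1) || (k \in domf s2).
Proof. by move=> /union_cat ->; rewrite mem_catf. Qed.

Lemma union_empty : union empty_subst empty_subst = Some empty_subst.
Proof. by rewrite /union /= cat0f. Qed.

Lemma union_empty_inv s : union empty_subst empty_subst = Some s -> s = empty_subst.
Proof. by rewrite union_empty => -[]. Qed.

Lemma dom_single x v k : (k \in domf (single_subst x v)) = (k == x).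
Proof. by rewrite /single_subst mem_setf !inE /= ?orbF. Qed.
Lemma dom_empty k : (k \in domf empty_subst) = false.
Proof. by []. Qed.

Lemma comm_bn p : communicable p -> bn p = [::].
Proof. by elim: p => //= p1 IH1 p2 IH2 /andP[/IH1 -> /IH2 ->]. Qed.

Lemma unify_dom r p th s : unify r p = Some (th, s) ->
  forall x, (x \in domf s) = (x \in bn p).
Proof.
elim: r p th s => [a|a|a|r1 IH1 r2 IH2] [b|b|b|p1 p2] th s //=;
  try (move=> [_ <-] x; rewrite ?dom_single ?inE //; done);
  try (case: ifP => // C [_ <-] x; rewrite ?dom_single ?inE //;
       try (move: C => /andP[/comm_bn -> /comm_bn ->]); done).
case E1: (unify r1 p1) => [[t1 s1]|] //; case E2: (unify r2 p2) => [[t2 s2]|] //.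
case: (union t1 t2) => // t; case U: (union s1 s2) => [u|] // [_ <-] x.
by rewrite (union_dom _ U) mem_cat (IH1 _ _ _ E1 x) (IH2 _ _ _ E2 x).
Qed.

Lemma comm_vn p : communicable p -> vn p != [::].
Proof. by elim: p => //= p1 IH1 p2 IH2 /andP[/IH1]; case: (vn p1). Qed.

Lemma fn_comp p1 p2 : fn (PComp p1 p2) = [::] -> fn p1 = [::] /\ fn p2 = [::].
Proof.
rewrite /fn /=; case: (vn p1); case: (vn p2); case: (pn p1); case: (pn p2) => //.
Qed.

Lemma apply_sub_l s1 s2 s p : union s1 s2 = Some s ->
  (forall x, x \in bn p -> x \in domf s1) -> apply_subst s p = apply_subst s1 p.
Proof.
move=> U; elim: p => [b|b|b|q1 J1 q2 J2] D //=.
  by rewrite (union_l U) // D // inE.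
by rewrite J1 ?J2 // => x Hx; apply: D; rewrite mem_cat Hx ?orbT.
Qed.

Lemma apply_sub_r s1 s2 s p : union s1 s2 = Some s ->
  (forall x, x \in bn p -> x \in domf s2) -> apply_subst s p = apply_subst s2 p.
Proof.
move=> U; elim: p => [b|b|b|q1 J1 q2 J2] D //=.
  by rewrite (union_r U) // D // inE.
by rewrite J1 ?J2 // => x Hx; apply: D; rewrite mem_cat Hx ?orbT.
Qed.

Lemma lbind p : fn p = [::] -> forall r th s, unify r p = Some (th, s) ->
  [/\ communicable r, th = empty_subst & apply_subst s p = r].
Proof.
elim: p => [b|b|b|p1 IH1 p2 IH2] Hf r th s //=.
- case: r => [a|a|a|r1 r2] /=; try by move=> []. all: try (case: ifP => // C [<- <-]; split=> //=; by rewrite /single_subst fnd_set eqxx).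
  by move=> [<- <-]; split => //; rewrite /single_subst fnd_set eqxx.
- have [H1 H2] := fn_comp Hf.
  case: r => [a|a|a|r1 r2] //=.
  + case: ifP => // /andP[/comm_vn]; by rewrite /fn in H1; case: (vn p1) H1.
  + case E1: (unify r1 p1) => [[t1 s1]|] //; case E2: (unify r2 p2) => [[t2 s2]|] //.
    have [C1 -> A1] := IH1 H1 _ _ _ E1; have [C2 -> A2] := IH2 H2 _ _ _ E2.
    case U0: (union _ _) => [t|] //; case U: (union s1 s2) => [u|] // [<- <-].
    split; first by rewrite C1 C2.
    * exact: union_empty_inv.
    * rewrite -A1 -A2 (apply_sub_l U) ?(apply_sub_r U) // => x;
        by rewrite ?(unify_dom E1) ?(unify_dom E2).
Qed.

Lemma compat_dom p s q rr : compat p s q rr -> forall x, (x \in domf s) = (x \in bn p).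
Proof.
elim => {p s q rr} //=.
- by move=> p s y [_ [_ D]] _.
- move=> p1 p2 q1 q2 s1 s2 r1 r2 s r _ IH1 _ IH2 U _ x.
  by rewrite (union_dom _ U) mem_cat IH1 IH2.
Qed.

Lemma compat_comm p s q rr : compat p s q rr -> communicable p -> q = p /\ rr = s.
Proof.
elim => {p s q rr} //=.
- move=> p s y _ Hf /comm_vn; by rewrite /fn in Hf; case: (vn p) Hf.
- move=> p1 p2 q1 q2 s1 s2 r1 r2 s r _ IH1 _ IH2 U V /andP[/IH1 [-> E1] /IH2 [-> E2]]; subst r1 r2.
  split => //; congruence.
Qed.

Lemma same_sub p s1 s2 s1' s2' s :
  union s1 s2 = Some s -> union s1' s2' = Some s ->
  (forall x, (x \in domf s1) = (x \in bn p)) ->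
  (forall x, (x \in domf s1') = (x \in bn p)) -> s1 = s1'.
Proof.
move=> U U' D D'; apply/fmapP => k.
case Hk: (k \in bn p).
  by rewrite -(union_l U) ?D // (union_l U') ?D'.
by rewrite !not_fnd ?D ?D' ?Hk.
Qed.

Lemma main p s q rr : compat p s q rr -> forall r th, unify r p = Some (th, s) -> unify r q = Some (th, rr).
Proof.
elim => {p s q rr}.
- move=> p s y M Hf [x|x|x|r1 r2] th H.
  + move: H => /=; case: p M Hf => [b|b|b|p1 p2] M Hf //=.
    case: ifP => // /andP[/comm_vn]; move: Hf; rewrite /fn /=.
    by case: (vn p1).
  + have [C -> A] := lbind Hf H; by rewrite /= A.
  + by have [C _ _] := lbind Hf H.
  + have [C -> A] := lbind Hf H; move: C A => /= -> A; by rewrite A.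
- by [].
- by [].
- move=> n [x|x|x|r1 r2] th //=.
- move=> p1 p2 q1 q2 s1 s2 r1 r2 s r C1 IH1 C2 IH2 U V [x|x|x|r1' r2'] th H.
  + have CC := compat_comp C1 C2 U V.
    move: H => /=; case: ifP => // Cp.
    have [E1 E2] := compat_comm CC Cp; case: E1 => -> ->; by rewrite E2 /= Cp.
  + by [].
  + by [].
  + move: H => /=.
    case E1: (unify r1' p1) => [[t1 s1']|] //; case E2: (unify r2' p2) => [[t2 s2']|] //.
    case T: (union t1 t2) => [t|] //; case U': (union s1' s2') => [u|] // [<- Hu].
    subst u.
    have e1 : s1' = s1 by apply: (same_sub U' U); [exact: unify_dom E1 | exact: compat_dom C1].
    have e2 : s2' = s2.
      apply/fmapP => k; case Hk: (k \in bn p2).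
        by rewrite -(union_r U') ?(unify_dom E2) // (union_r U) ?(compat_dom C2).
      by rewrite !not_fnd ?(unify_dom E2) ?(compat_dom C2) ?Hk.
    subst s1' s2'.
    by rewrite (IH1 _ _ E1) (IH2 _ _ E2) T V.
Qed.

Theorem proposition3p20 (p q : pattern) (sigma rho : subst) :
  is_match p sigma -> is_match q rho ->
  compat p sigma q rho ->
  forall (r : pattern) (theta : subst),
    well_formed r -> is_subst theta ->
    unify r p = Some (theta, sigma) ->
    unify r q = Some (theta, rho).
Proof.
move=> _ _ C r th _ _; exact: main C r th.
Qed.
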